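(* Let $z_i=(x_i,y_i)$, $i=1,\dots,n$, be training data with $y_i\in\mathbb{R}$. Index by $b$ the $B=n^n$ bootstrap samples (ordered $n$-tuples of indices in $\{1,\dots,n\}$), and for each $b$ let $\widehat{y_j}^{(b)}\in\mathbb{R}$ be the prediction for observation $j$ of the tree grown on sample $b$, assumed to be a deterministic function of $b$. Let $N_i^{(b)}$ be the number of times observation $i$ occurs in sample $b$ and $I_j^{(b)}=\mathbf{1}(N_j^{(b)}=0)$. For a weight vector $W=(w_1,\dots,w_n)$ with $\sum_i w_i=1$, let $g_W(b)$ be the probability of drawing the bootstrap sample $b$ when each of the $n$ draws selects observation $k$ with probability $w_k$, and define $$S(\hat F_W)=\sum_{j=1}^n w_j\left(y_j-\frac{\sum_b \widehat{y_j}^{(b)} I_j^{(b)} g_W(b)}{\sum_b I_j^{(b)} g_W(b)}\right)^2 .$$ Let $\hat F=\hat F_{W_0}$ with $W_0=(1/n,\dots,1/n)$, so that $S(\hat F)=\frac1n\sum_j (y_j-\widehat{y_j}^{\mathrm{OOB}})^2$ where $\widehat{y_j}^{\mathrm{OOB}}=\frac{\sum_b \widehat{y_j}^{(b)}I_j^{(b)}}{\sum_b I_j^{(b)}}$. For $\varepsilon$ near $0$ let $\hat F_{\varepsilon,i}$ be the distribution putting weight $\frac{1-\varepsilon}{n}+\varepsilon$ on $z_i$ and $\frac{1-\varepsilon}{n}$ on each $z_j$, $j\ne i$, and define $\hat D_i=\frac1n\frac{\partial S(\hat F_{\varepsilon,i})}{\partial\varepsilon}\big|_{\varepsilon=0}$.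 Then, with $e_n=(1-1/n)^{-n}$, $$\hat D_i=\frac1n\left\{(y_i-\widehat{y_i}^{\mathrm{OOB}})^2-\frac1n\sum_j (y_j-\widehat{y_j}^{\mathrm{OOB}})^2\right\}-\frac{2e_n}{n}\sum_j (y_j-\widehat{y_j}^{\mathrm{OOB}})\left\{\frac1B\sum_b (N_i^{(b)}-1)I_j^{(b)}\big(\widehat{y_j}^{(b)}-\widehat{y_j}^{\mathrm{OOB}}\big)\right\}.$$
   Context: This is the out-of-bag (OOB) error of a bagged ensemble of regression trees under squared-error loss, viewed as a functional $S$ of a weighted empirical distribution on the training data; $\hat D_i$ is $1/n$ times the empirical influence function of $S$. All sums over $b$ range over all $B=n^n$ bootstrap samples. *)

(* Defs.v *)
From HB Require Import structures.
From mathcomp Require Import all_boot all_order all_algebra.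
From mathcomp Require Import all_classical all_reals all_analysis.
Set Implicit Arguments. Unset Strict Implicit. Unset Printing Implicit Defensive.
Import Order.TTheory GRing.Theory Num.Theory.
Local Open Scope ring_scope.

(* Bootstrap samples: ordered n-tuples of indices, i.e. functions 'I_n -> 'I_n
   (b k = index of the observation selected at the k-th draw). *)
Notation bsample n := {ffun 'I_n -> 'I_n}.

Section Bagging.
Variables (R : realType) (n : nat).
Variables (y : 'I_n -> R) (yhat : bsample n -> 'I_n -> R).

Definition Ncount (b : bsample n) (i : 'I_n) : nat := #|[set k | b k == i]|.

Definition Iout (b : bsample n) (j : 'I_n) : R := ((Ncount b j == 0)%N)%:R.

Definition gW (w : 'I_n -> R) (b : bsample n) : R := \prod_(k < n) w (b k).

Definition S_W (w : 'I_n -> R) : R :=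
  \sum_(j < n) w j *
    (y j - (\sum_(b : bsample n) yhat b j * Iout b j * gW w b)
           / (\sum_(b : bsample n) Iout b j * gW w b)) ^+ 2.

Definition Weps (i : 'I_n) (eps : R) : 'I_n -> R :=
  fun j => (1 - eps) / n%:R + (if j == i then eps else 0).

Definition yOOB (j : 'I_n) : R :=
  (\sum_(b : bsample n) yhat b j * Iout b j) / (\sum_(b : bsample n) Iout b j).

Definition Dhat (i : 'I_n) : R :=
  n%:R^-1 * derive1 (fun eps : R => S_W (Weps i eps)) 0.

Definition e_n : R := (1 - n%:R^-1) ^- n.

End Bagging.
Arguments Iout {R n} b j.

(* Main.v *)
Require Import Defs.
From HB Require Import structures.
From mathcomp Require Import all_boot all_order all_algebra.
From mathcomp Require Import all_classical all_reals all_analysis.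
From mathcomp Require Import ring lra.
Import Order.TTheory GRing.Theory Num.Theory.
Local Open Scope ring_scope.

Section H.
Variable R : realType.
Implicit Types (f g : R -> R) (x df dg : R).

Lemma hdcst x (k : R) : is_derive x 1 (fun _ : R => k) 0.
Proof. exact: is_derive_cst. Qed.
Lemma hdid x : is_derive x 1 (fun e : R => e) 1.
Proof. exact: is_derive_id. Qed.
Lemma hdD f g x df dg : is_derive x 1 f df -> is_derive x 1 g dg ->
  is_derive x 1 (fun e => f e + g e) (df + dg).
Proof. move=> H1 H2; exact: is_deriveD. Qed.
Lemma hdB f g x df dg : is_derive x 1 f df -> is_derive x 1 g dg ->
  is_derive x 1 (fun e => f e - g e) (df - dg).
Proof. move=> H1 H2; exact: is_deriveB. Qed.
Lemma hdM f g x df dg : is_derive x 1 f df -> is_derive x 1 g dg ->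
  is_derive x 1 (fun e => f e * g e) (f x * dg + g x * df).
Proof. move=> H1 H2; exact: is_deriveM. Qed.
Lemma hdV f x df : f x != 0 -> is_derive x 1 f df ->
  is_derive x 1 (fun e => (f e)^-1) (- df / (f x)^+2).
Proof.
move=> H1 H2; have K := is_deriveV H1 H2; refine (is_derive_eq K _).
change (- (f x ^- 2) * df = - df / f x ^+ 2); by rewrite mulNr mulrC mulNr.
Qed.
Lemma hdMl f x df (k : R) : is_derive x 1 f df ->
  is_derive x 1 (fun e => k * f e) (k * df).
Proof.
move=> H; refine (is_derive_eq (hdM _ _ _ _ _ (hdcst x k) H) _).
by rewrite mulr0 addr0.
Qed.
Lemma hdX2 f x df : is_derive x 1 f df ->
  is_derive x 1 (fun e => f e ^+ 2) (2 * f x * df).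
Proof.
move=> H; have -> : (fun e => f e ^+ 2) = (fun e => f e * f e).
  by apply/funext => e; rewrite expr2.
refine (is_derive_eq (hdM _ _ _ _ _ H H) _).
by ring.
Qed.
Lemma hdsum (I : Type) (r : seq I) (P : pred I) (F : I -> R -> R) (dF : I -> R) x :
  (forall k, is_derive x 1 (F k) (dF k)) ->
  is_derive x 1 (fun e => \sum_(k <- r | P k) F k e) (\sum_(k <- r | P k) dF k).
Proof.
move=> H; elim: r => [|a r IH].
  have -> : (fun e => \sum_(k <- [::] | P k) F k e) = (fun _ => 0).
    by apply/funext => e; rewrite big_nil.
  by rewrite big_nil; exact: hdcst.
have -> : (fun e => \sum_(k <- a :: r | P k) F k e) =
  (fun e => (if P a then F a e else 0) + \sum_(k <- r | P k) F k e).
  by apply/funext => e; rewrite big_cons; case: (P a) => //; rewrite add0r.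
rewrite big_cons; case: (P a).
  exact: hdD.
rewrite -[X in is_derive _ _ _ X]add0r; apply: hdD => //; exact: hdcst.
Qed.
Lemma hdprod (I : Type) (r : seq I) (F : I -> R -> R) (dF : I -> R) x (c : R) :
  (forall k, is_derive x 1 (F k) (dF k)) -> (forall k, F k x = c) ->
  is_derive x 1 (fun e => \prod_(k <- r) F k e) (\sum_(k <- r) dF k * c ^+ (size r).-1).
Proof.
move=> H Hc; elim: r => [|a r IH].
  have -> : (fun e => \prod_(k <- [::]) F k e) = (fun _ => 1).
    by apply/funext => e; rewrite big_nil.
  by rewrite big_nil; exact: hdcst.
have -> : (fun e => \prod_(k <- a :: r) F k e) =
  (fun e => F a e * \prod_(k <- r) F k e).
  by apply/funext => e; rewrite big_cons.
refine (is_derive_eq (hdM _ _ _ _ _ (H a) IH) _).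
rewrite Hc big_cons /=.
have -> : \prod_(k <- r) F k x = c ^+ size r.
  rewrite (eq_bigr (fun _ => c)) // big_const_seq count_predT.
  by elim: (size r) => //= m ->; rewrite exprS.
case: r IH => [|b r] IH /=.
  by rewrite !big_nil mulr0 add0r addr0 expr0 mulr1 mul1r.
rewrite mulr_sumr addrC; congr (_ + _); first by rewrite mulrC.
by apply: eq_bigr => k _; rewrite mulrCA -exprS.
Qed.
End H.
Arguments hdcst {R} x k. Arguments hdid {R} x. Arguments hdD {R f g x df dg}.
Arguments hdB {R f g x df dg}. Arguments hdM {R f g x df dg}. Arguments hdV {R f x df}.
Arguments hdMl {R f x df} k. Arguments hdX2 {R f x df}. Arguments hdsum {R I r P F dF x}.
Arguments hdprod {R I r F dF x c}.
Lemma size_ie n : size (index_enum 'I_n) = n.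
Proof. by rewrite /index_enum unlock -enumT -cardT card_ord. Qed.

Lemma Ncount_sum n (b : {ffun 'I_n -> 'I_n}) i (R : realType) :
  (Ncount b i)%:R = \sum_(k < n) ((b k == i)%:R : R).
Proof.
rewrite -natr_sum /Ncount cardsE -sum1_card big_mkcond /=.
by congr (_%:R); apply: eq_bigr => k _; rewrite inE; case: (b k == i).
Qed.

Lemma sumI (R : realType) n (j : 'I_n) :
  \sum_(b : {ffun 'I_n -> 'I_n}) (Iout b j : R) = ((n.-1 ^ n)%N)%:R.
Proof.
have -> : (n.-1 ^ n)%N = #|ffun_on_mem 'I_n (mem (predC1 j))| by rewrite card_ffun_on cardC1 !card_ord.
rewrite -sum1_card natr_sum [RHS]big_mkcond /=; apply: eq_bigr => b _.
rewrite /Iout /Ncount cards_eq0.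
have -> : ([set k | b k == j] == finset.set0) = (b \in ffun_on (predC1 j)).
  apply/idP/idP.
    move/eqP => H; apply/ffun_onP => k /=; apply/negP => /eqP E.
    by move/setP: H => /(_ k); rewrite !inE E eqxx.
  move/ffun_onP => H; apply/eqP/setP => k; rewrite !inE.
  by have := H k; rewrite inE /= => /negbTE.
by case: (b \in _).
Qed.

Theorem theorem1 (R : realType) (n : nat) (hn : (1 < n)%N)
  (y : 'I_n -> R) (yhat : {ffun 'I_n -> 'I_n} -> 'I_n -> R) (i : 'I_n) :
  derivable (fun eps : R => S_W y yhat (Weps i eps)) 0 1 /\
  Dhat y yhat i =
    n%:R^-1 * ((y i - yOOB yhat i) ^+ 2
               - n%:R^-1 * \sum_(j < n) (y j - yOOB yhat j) ^+ 2)
    - 2 * e_n R n / n%:R *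
      \sum_(j < n) (y j - yOOB yhat j) *
        ((n ^ n)%:R^-1 *
         \sum_(b : {ffun 'I_n -> 'I_n})
            ((Ncount b i)%:R - 1) * Iout b j * (yhat b j - yOOB yhat j)).
Proof.
have n0 : (n%:R : R) != 0 by rewrite pnatr_eq0 -lt0n ltnW.
have w0 : forall m : 'I_n, Weps i (0:R) m = n%:R^-1.
  by move=> m; rewrite /Weps subr0 mul1r; case: (m == i); rewrite addr0.
have dw : forall m : 'I_n, is_derive (0:R) 1 (fun e : R => Weps i e m) (- n%:R^-1 + (m == i)%:R).
  move=> m; rewrite /Weps.
  have H1 := hdM (hdB (hdcst (0:R) 1) (hdid 0)) (hdcst (0:R) (n%:R^-1)).
  have H2 : is_derive (0:R) 1 (fun e : R => if m == i then e else 0) (m == i)%:R.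
    by case: (m == i); [exact: hdid | exact: hdcst].
  refine (is_derive_eq (hdD H1 H2) _).
  by rewrite /=; ring.
have dg : forall b : {ffun 'I_n -> 'I_n}, is_derive (0:R) 1 (fun e : R => gW (Weps i e) b)
    (n%:R^-1 ^+ n.-1 * ((Ncount b i)%:R - 1)).
  move=> b; rewrite /gW.
  refine (is_derive_eq (@hdprod _ _ (index_enum 'I_n) (fun k e => Weps i e (b k)) _ _ _
     (fun k => dw (b k)) (fun k => w0 (b k))) _).
  rewrite size_ie -big_distrl /= Ncount_sum mulrC; congr (_ * _).
  rewrite big_split /= sumrN addrC; congr (_ - _).
  by rewrite sumr_const card_ord -[_^-1 *+ n]mulr_natr mulVf.
have g0 : forall b : {ffun 'I_n -> 'I_n}, gW (Weps i (0:R)) b = n%:R^-1 ^+ n.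
  move=> b; rewrite /gW (eq_bigr (fun _ => n%:R^-1)); last by move=> k _; exact: w0.
  by rewrite prodr_const card_ord.
have SI : forall j : 'I_n, \sum_(b : {ffun 'I_n -> 'I_n}) Iout b j * gW (Weps i (0:R)) b
    = ((n.-1 ^ n)%N)%:R * n%:R^-1 ^+ n.
  by move=> j; under eq_bigr do rewrite g0; rewrite -big_distrl /= sumI.
have SA : forall j : 'I_n, \sum_(b : {ffun 'I_n -> 'I_n}) yhat b j * Iout b j * gW (Weps i (0:R)) b
    = (\sum_(b : {ffun 'I_n -> 'I_n}) yhat b j * Iout b j) * n%:R^-1 ^+ n.
  by move=> j; under eq_bigr do rewrite g0; rewrite -big_distrl.
have S0 : ((n.-1 ^ n)%N)%:R != 0 :> R.
  by rewrite pnatr_eq0 expn_eq0 negb_and -lt0n -ltnS prednK ?orbT ?hn // ltnW.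
have c0 : n%:R^-1 ^+ n != 0 :> R by rewrite expf_neq0 // invr_eq0.
have HA : forall j : 'I_n, is_derive (0:R) 1
    (fun e : R => \sum_(b : {ffun 'I_n -> 'I_n}) yhat b j * Iout b j * gW (Weps i e) b)
    (\sum_(b : {ffun 'I_n -> 'I_n}) yhat b j * Iout b j * (n%:R^-1 ^+ n.-1 * ((Ncount b i)%:R - 1))).
  move=> j; apply: hdsum => b; exact: hdMl.
have HC : forall j : 'I_n, is_derive (0:R) 1
    (fun e : R => \sum_(b : {ffun 'I_n -> 'I_n}) Iout b j * gW (Weps i e) b)
    (\sum_(b : {ffun 'I_n -> 'I_n}) Iout b j * (n%:R^-1 ^+ n.-1 * ((Ncount b i)%:R - 1))).
  move=> j; apply: hdsum => b; exact: hdMl.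
have C0 : forall j : 'I_n, \sum_(b : {ffun 'I_n -> 'I_n}) Iout b j * gW (Weps i (0:R)) b != 0.
  by move=> j; rewrite SI mulf_neq0.
have HQ := fun j : 'I_n => hdM (HA j) (hdV (C0 j) (HC j)).
have Hterm := fun j : 'I_n => hdM (dw j) (hdX2 (hdB (hdcst (0:R) (y j)) (HQ j))).
have Hall := hdsum (r := index_enum 'I_n) (P := xpredT) Hterm.
split; first exact: (@ex_derive _ _ _ _ _ (fun eps : R => S_W y yhat (Weps i eps)) _ Hall).
rewrite /Dhat derive1E (@derive_val _ _ _ _ _ (fun eps : R => S_W y yhat (Weps i eps)) _ Hall).
have nE : (n%:R : R) = (n.-1)%:R + 1 by rewrite natr1 prednK // ltnW.
have n10 : ((n.-1)%:R : R) != 0 by rewrite pnatr_eq0 -lt0n -ltnS prednK // ltnW.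
have eK : e_n R n = ((n ^ n)%N)%:R * (((n.-1 ^ n)%N)%:R)^-1.
  rewrite /e_n !natrX.
  have -> : 1 - (n%:R : R)^-1 = (n.-1)%:R / n%:R.
    by rewrite nE; field; rewrite -nE.
  by rewrite exprMn exprVn invfM invrK mulrC.
have Hi : (y i - yOOB yhat i) ^+ 2 = \sum_(j < n) (y j - yOOB yhat j) ^+ 2 * (j == i)%:R.
  rewrite (bigD1 i) //= eqxx mulr1 big1 ?addr0 // => j /negbTE ->.
  by rewrite mulr0.
rewrite Hi eK.
set X := fun j : 'I_n => \sum_(b : {ffun 'I_n -> 'I_n})
            ((Ncount b i)%:R - 1) * Iout b j * (yhat b j - yOOB yhat j).
set B : R := ((n ^ n)%N)%:R.
set S : R := ((n.-1 ^ n)%N)%:R.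
have -> : forall A1 A2 A3 : R, n%:R^-1 * (A1 - n%:R^-1 * A2) - 2 * (B * S^-1) / n%:R * A3 =
   n%:R^-1 * (A1 - n%:R^-1 * A2 - 2 * (B * S^-1) * A3) by move=> *; ring.
congr (_ * _).
rewrite [n%:R^-1 * _]mulr_sumr [2 * (B / S) * _]mulr_sumr -!sumrB.
apply: eq_bigr => j _.
have HP : \sum_(b : {ffun 'I_n -> 'I_n}) yhat b j * Iout b j = yOOB yhat j * S.
  by rewrite /yOOB sumI mulfVK.
have HdA : \sum_(b : {ffun 'I_n -> 'I_n}) yhat b j * Iout b j * (n%:R^-1 ^+ n.-1 * ((Ncount b i)%:R - 1))
  = yOOB yhat j * \sum_(b : {ffun 'I_n -> 'I_n}) Iout b j * (n%:R^-1 ^+ n.-1 * ((Ncount b i)%:R - 1))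
    + n%:R^-1 ^+ n.-1 * \sum_(b : {ffun 'I_n -> 'I_n}) ((Ncount b i)%:R - 1) * Iout b j * (yhat b j - yOOB yhat j).
  rewrite !mulr_sumr -big_split /=; apply: eq_bigr => b _; ring.
have cn : (n%:R^-1 : R) ^+ n = n%:R^-1 * n%:R^-1 ^+ n.-1 by rewrite -exprS prednK // ltnW.
have t0 : (n%:R^-1 : R) ^+ n.-1 != 0 by rewrite expf_neq0 // invr_eq0.
have B0 : B != 0 by rewrite /B pnatr_eq0 expn_eq0 negb_and -lt0n ltnW.
rewrite w0 SA SI -/S HP HdA cn.
field.
by rewrite B0 S0 n0 t0.
Qed.
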